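(* Let $k$ be a field, $\mathbf C$ a finite free category (i.e. freely generated by a directed graph), $\mathcal{A}$ a presheaf of $k$-algebras on $\mathbf C$ and $\mathcal{M}$ a presheaf of $\mathcal{A}$-bimodules. Then the spectral sequence $\{E_r^{*,*}\}$ of the Gerstenhaber–Schack double complex, obtained by first taking cohomology in the Hochschild direction, satisfies $E_2^{p,q}=0$ for all $p\geq 2$ and $q\geq 0$.
   Context: Presheaf of $k$-algebras: functor $\mathcal{A}\colon\mathbf C^{\mathrm{op}}\to\mathbf{Alg}_k$ (associative unital finite-dimensional algebras). Presheaf of $\mathcal{A}$-bimodules: functor $\mathcal{M}$ on $\mathbf C^{\mathrm{op}}$ with each $\mathcal{M}(c)$ an $\mathcal{A}(c)$-bimodule and each $\mathcal{M}(d)\to\mathcal{M}(c)$ (for $c\to d$) an $\mathcal{A}(d)$-bimodule map via $\mathcal{A}(d)\to\mathcal{A}(c)$. The Gerstenhaber–Schack double complex: $C^{p,q}(\mathcal{A},\mathcal{M})=\prod_{\sigma}\mathrm{Hom}_k(\mathcal{A}(c_p)^{\otimes q},\mathcal{M}(c_0))$ over strings $\sigma=(c_0\to\cdots\to c_p)$ of composable morphisms, with the Hochschild differential $d_{\mathrm{HH}}$ in $q$ and the simplicial differential $(d_{\mathrm{simp}}\Gamma)^\sigma=T\circ\Gamma^{\partial_0\sigma}+\sum_{r=1}^{p-1}(-1)^r\Gamma^{\partial_r\sigma}+(-1)^p\Gamma^{\partial_p\sigma}\circ\phi^{\otimes q}$ in $p$ ($\partial_r$ deletes $c_r$; $T\colon\mathcal{M}(c_1)\to\mathcal{M}(c_0)$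 and $\phi\colon\mathcal{A}(c_p)\to\mathcal{A}(c_{p-1})$ are the structure maps); its total cohomology is the diagrammatic Hochschild cohomology $\mathrm{HH}^*_{\mathrm{GS}}(\mathcal{A},\mathcal{M})$. *)

(* Defs.v *)
From HB Require Import structures.
From mathcomp Require Import all_boot all_order all_algebra.
From mathcomp Require Import falgebra.
Set Implicit Arguments. Unset Strict Implicit. Unset Printing Implicit Defensive.
Import GRing.Theory.
Local Open Scope ring_scope.

(* Finite categories (objects and hom-sets are finite types).
   Composition is written in diagrammatic order: comp f g = g o f.    *)
Record fincat := FinCat {
  Obj :> finType;
  Hom : Obj -> Obj -> finType;
  idm : forall a, Hom a a;
  comp : forall a b c, Hom a b -> Hom b c -> Hom a c;
  comp_id_l : forall a b (f : Hom a b), comp (idm a) f = f;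
  comp_id_r : forall a b (f : Hom a b), comp f (idm b) = f;
  comp_assoc : forall a b c d (f : Hom a b) (g : Hom b c) (h : Hom c d),
      comp f (comp g h) = comp (comp f g) h
}.
Arguments Hom {C} : rename.
Arguments idm {C} : rename.
Arguments comp {C a b c} : rename.

(* Strings  c_0 -f_1-> c_1 -f_2-> ... -f_n-> c_n  of n composable morphisms
   (c_0 = a, c_n = c); identities are allowed (unnormalized nerve). *)
Unset Implicit Arguments.
Inductive str (C : fincat) : nat -> C -> C -> Type :=
| snil (c : C) : str C 0 c c
| scons (n : nat) (a b c : C) (f : Hom a b) (s : str C n b c) : str C n.+1 a c.
Set Implicit Arguments.
Arguments snil {C}.
Arguments scons {C n a b c}.

Fixpoint str_comp (C : fincat) n (a c : C) (s : str C n a c) : Hom a c :=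
  match s in str _ _ a c return Hom a c with
  | snil c => idm c
  | scons _ _ _ _ f t => comp f (str_comp t)
  end.

Definition gen_str (C : fincat) (gen : forall a b : C, pred (Hom a b)) :=
  fix gs n (a c : C) (s : str C n a c) : bool :=
    match s with
    | snil _ => true
    | scons _ _ _ _ f t => gen _ _ f && gs _ _ _ t
    end.

Definition free_cat (C : fincat) : Prop :=
  exists gen : forall a b : C, pred (Hom a b),
    forall (a c : C) (f : Hom a c),
      exists n (s : str C n a c),
        [/\ gen_str gen s, str_comp s = f &
            forall m (t : str C m a c), gen_str gen t -> str_comp t = f ->
              existT (fun m => str C m a c) n s = existT _ m t].

Record psh_alg (k : fieldType) (C : fincat) := PshAlg {
  Aob : C -> falgType k;
  Amor : forall a b : C, Hom a b -> Aob b -> Aob a;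
  Amor_linear : forall a b (f : Hom a b), linear (Amor f);
  Amor_monoid : forall a b (f : Hom a b), monoid_morphism (Amor f);
  Amor_id : forall a x, Amor (idm a) x = x;
  Amor_comp : forall a b c (f : Hom a b) (g : Hom b c) x,
      Amor (comp f g) x = Amor f (Amor g x)
}.
Arguments Aob {k C}.
Arguments Amor {k C} A {a b} : rename.

Record psh_bimod (k : fieldType) (C : fincat) (A : psh_alg k C) := PshBimod {
  Mob : C -> lmodType k;
  lact : forall c, Aob A c -> Mob c -> Mob c;
  ract : forall c, Mob c -> Aob A c -> Mob c;
  lact_linl : forall c (m : Mob c), linear (fun x => lact x m);
  lact_linr : forall c (x : Aob A c), linear (lact x);
  ract_linl : forall c (x : Aob A c), linear (fun m => ract m x);
  ract_linr : forall c (m : Mob c), linear (ract m);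
  lact1 : forall c (m : Mob c), lact 1 m = m;
  ract1 : forall c (m : Mob c), ract m 1 = m;
  lactM : forall c (x y : Aob A c) m, lact (x * y) m = lact x (lact y m);
  ractM : forall c (x y : Aob A c) m, ract m (x * y) = ract (ract m x) y;
  lact_ract : forall c (x y : Aob A c) m, lact x (ract m y) = ract (lact x m) y;
  Mmor : forall a b : C, Hom a b -> Mob b -> Mob a;
  Mmor_linear : forall a b (f : Hom a b), linear (Mmor f);
  Mmor_lact : forall a b (f : Hom a b) x m,
      Mmor f (lact x m) = lact (Amor A f x) (Mmor f m);
  Mmor_ract : forall a b (f : Hom a b) m x,
      Mmor f (ract m x) = ract (Mmor f m) (Amor A f x);
  Mmor_id : forall a m, Mmor (idm a) m = m;
  Mmor_comp : forall a b c (f : Hom a b) (g : Hom b c) m,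
      Mmor (comp f g) m = Mmor f (Mmor g m)
}.
Arguments Mob {k C A}.
Arguments lact {k C A} M {c} : rename.
Arguments ract {k C A} M {c} : rename.
Arguments Mmor {k C A} M {a b} : rename.

Definition str_uncons (C : fincat) n (a c : C) (s : str C n.+1 a c)
  : {b : C & (Hom a b * str C n b c)%type} :=
  match s in str _ m a c
    return (match m with 0 => unit | n.+1 => {b : C & (Hom a b * str C n b c)%type} end)
  with
  | snil _ => tt
  | scons _ _ b _ f t => existT _ b (f, t)
  end.

Definition str0_hom (C : fincat) (a b c : C) (f : Hom a b) (t : str C 0 b c) : Hom a c :=
  match t in str _ m b' c' return (match m with 0 => Hom a b' -> Hom a c' | _ => unit end)
  with
  | snil _ => fun f => f
  | scons _ _ _ _ _ _ => tt
  end f.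

Fixpoint str_unsnoc (C : fincat) n : forall (a c : C), str C n.+1 a c ->
    {b : C & (str C n a b * Hom b c)%type} :=
  match n with
  | 0 => fun a c s =>
      let: existT b (f, t) := str_uncons s in existT _ a (snil a, str0_hom f t)
  | m.+1 => fun a c s =>
      let: existT b (f, t) := str_uncons s in
      let: existT b' (t', g) := str_unsnoc t in
      existT _ b' (scons f t', g)
  end.

(* inner face: compose f_{j+1} and f_{j+2} (0-based j), deleting c_{j+1} *)
Fixpoint str_inner (C : fincat) n (j : nat) : forall (a c : C), str C n.+2 a c -> str C n.+1 a c :=
  match n with
  | 0 => fun a c s =>
      let: existT b (f, t) := str_uncons s in
      let: existT d (g, u) := str_uncons t in scons (comp f g) u
  | m.+1 => fun a c s =>
      let: existT b (f, t) := str_uncons s in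
      match j with
      | 0 => let: existT d (g, u) := str_uncons t in scons (comp f g) u
      | j'.+1 => scons f (str_inner j' t)
      end
  end.

(* A (p,q)-cochain assigns to each string sigma = (c_0 -> ... -> c_p) a map
   A(c_p)^q -> M(c_0); Hom_k(A(c_p)^{(x) q}, M(c_0)) is represented by the
   k-multilinear maps A(c_p)^q -> M(c_0). *)
Section GS.
Variables (k : fieldType) (C : fincat) (A : psh_alg k C) (M : psh_bimod A).

Definition cochain (p q : nat) :=
  forall a c : C, str C p a c -> {ffun 'I_q -> Aob A c} -> Mob M a.

Definition fset_at (T : Type) q (x : {ffun 'I_q -> T}) (i : 'I_q) (y : T) :=
  [ffun j => if j == i then y else x j].

Definition multilin p q (G : cochain p q) : Prop :=
  forall a c (s : str C p a c) (i : 'I_q) (x : {ffun 'I_q -> Aob A c}),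
    linear (fun y => G a c s (fset_at x i y)).

Definition ceq p q (G H : cochain p q) : Prop :=
  forall a c (s : str C p a c) x, G a c s x = H a c s x.

Definition czero p q : cochain p q := fun _ _ _ _ => 0.
Definition csub p q (G H : cochain p q) : cochain p q :=
  fun a c s x => G a c s x - H a c s x.

Definition tl_tuple (T : Type) q (x : {ffun 'I_q.+1 -> T}) : {ffun 'I_q -> T} :=
  [ffun j => x (lift ord0 j)].
Definition init_tuple (T : Type) q (x : {ffun 'I_q.+1 -> T}) : {ffun 'I_q -> T} :=
  [ffun j => x (widen_ord (leqnSn q) j)].
Definition merge_tuple (R : nzRingType) q (i : 'I_q) (x : {ffun 'I_q.+1 -> R})
  : {ffun 'I_q -> R} :=
  [ffun j : 'I_q => if (j < i)%N then x (widen_ord (leqnSn q) j)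
                    else if j == i then x (widen_ord (leqnSn q) i) * x (lift ord0 i)
                    else x (lift ord0 j)].

(* Hochschild differential; M(c_0) is an A(c_p)-bimodule through the
   structure map of the composite c_0 -> c_p of sigma. *)
Definition dHH p q (G : cochain p q) : cochain p q.+1 :=
  fun a c s x =>
    let phi := Amor A (str_comp s) in
    lact M (phi (x ord0)) (G a c s (tl_tuple x))
    + \sum_(i < q) (-1) ^+ i.+1 *: G a c s (merge_tuple i x)
    + (-1) ^+ q.+1 *: ract M (G a c s (init_tuple x)) (phi (x ord_max)).

Definition dsimp_inner p q : cochain p q -> cochain p.+1 q :=
  match p with
  | 0 => fun _ _ _ _ _ => 0
  | n.+1 => fun G a c s x => \sum_(j < n.+1) (-1) ^+ j.+1 *: G a c (str_inner j s) x
  end.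

Definition dsimp p q (G : cochain p q) : cochain p.+1 q :=
  fun a c s x =>
    (let: existT b (f, t) := str_uncons s in Mmor M f (G b c t x))
    + dsimp_inner G s x
    + (-1) ^+ p.+1 *:
        (let: existT b (t, g) := str_unsnoc s in
         G a b t [ffun i => Amor A g (x i)]).

Definition HH_closed p q (G : cochain p q) : Prop := ceq (dHH G) (@czero p q.+1).

(* G (an HH-cocycle) represents 0 in E_1^{p,q} = H^q(C^{p,*}, d_HH) *)
Definition E1_zero p q : cochain p q -> Prop :=
  match q with
  | 0 => fun G => ceq G (@czero p 0)
  | q'.+1 => fun G => exists H : cochain p q', multilin H /\ ceq (dHH H) G
  end.

(* E_2^{p,q} = H^p(E_1^{*,q}, d_simp) = 0 *)
Definition E2_exact p q : cochain p q -> Prop :=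
  match p with
  | 0 => fun G => E1_zero G
  | p'.+1 => fun G => exists L : cochain p' q,
       [/\ multilin L, HH_closed L & E1_zero (csub G (dsimp L))]
  end.

Definition E2_zero p q : Prop :=
  forall G : cochain p q, multilin G -> HH_closed G ->
    E1_zero (dsimp G) -> E2_exact G.

End GS.

(* Main.v *)
Require Import Defs.
From mathcomp Require Import all_boot all_order all_algebra falgebra.
From Stdlib Require Import ClassicalEpsilon.
Set Implicit Arguments. Unset Strict Implicit. Unset Printing Implicit Defensive.
Import GRing.Theory.
Local Open Scope ring_scope.

Section Str.
Variable C : fincat.

Fixpoint snoc n (a b : C) (s : str C n a b) : forall c, Defs.Hom b c -> str C n.+1 a c :=
  match s in str _ n a b return forall c, Defs.Hom b c -> str C n.+1 a c with
  | snil b => fun c f => scons f (snil c)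
  | scons _ _ _ _ g t => fun c f => scons g (snoc t f)
  end.

Fixpoint sapp n m (a b c : C) (s : str C n a b) : str C m b c -> str C (n + m) a c :=
  match s in str _ n a b return str C m b c -> str C (n + m) a c with
  | snil b => fun t => t
  | scons _ _ _ _ g s' => fun t => scons g (sapp s' t)
  end.

Lemma str_consP n (a c : C) (s : str C n.+1 a c) :
  exists b (f : Defs.Hom a b) (t : str C n b c), s = scons f t.
Proof.
have H : forall m (s : str C m a c), (match m return str C m a c -> Prop with
  0 => fun _ => True | n.+1 => fun s => exists b (f : Defs.Hom a b) (t : str C n b c), s = scons f t end) s.
  by move=> m {}s; case: s => //= n' a' b' c' f t; exists b', f, t.
exact: (H n.+1 s).
Qed.

Lemma str0P (P : forall a c : C, str C 0 a c -> Prop) :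
  (forall c, P c c (snil c)) -> forall a c s, P a c s.
Proof.
move=> H a c s.
have : forall m (s : str C m a c), (match m return str C m a c -> Prop with 0 => fun s => P a c s | _ => fun _ => True end) s.
  by move=> m {}s; case: s.
by move/(_ 0 s).
Qed.

Lemma unsnoc_snoc n (a b c : C) (s : str C n a b) (f : Defs.Hom b c) :
  str_unsnoc (snoc s f) = existT _ b (s, f).
Proof.
elim: s c f => [b' c f | n' a' b' c' g t IH c f] //=.
by rewrite IH.
Qed.

Lemma snocP n (a c : C) (s : str C n.+1 a c) :
  exists b (t : str C n a b) (f : Defs.Hom b c), s = snoc t f.
Proof.
elim: n a s => [|n IH] a s.
  have [b [f [t ->]]] := str_consP s.
  clear s; move: b c t f; apply: str0P => c f.
  by exists a, (snil a), f.
have [b [f [t ->]]] := str_consP s.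
have [b' [t' [g ->]]] := IH _ t.
by exists b', (scons f t'), g.
Qed.

Lemma str_comp_snoc n (a b c : C) (s : str C n a b) (f : Defs.Hom b c) :
  str_comp (snoc s f) = Defs.comp (str_comp s) f.
Proof.
elim: s c f => [b' c f | n' a' b' c' g t IH c f] /=.
  by rewrite comp_id_r comp_id_l.
by rewrite IH comp_assoc.
Qed.

Lemma str_comp_sapp n m (a b c : C) (s : str C n a b) (t : str C m b c) :
  str_comp (sapp s t) = Defs.comp (str_comp s) (str_comp t).
Proof.
elim: s t => [b' t | n' a' b' c' g s IH t] /=.
  by rewrite comp_id_l.
by rewrite IH comp_assoc.
Qed.

Lemma inner_snoc n j (a b c : C) (s : str C n.+2 a b) (f : Defs.Hom b c) :
  (j < n.+1)%N -> str_inner j (snoc s f) = snoc (str_inner j s) f.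
Proof.
elim: n j a s => [|n IH] j a s Hj.
  have [b1 [f1 [t ->]]] := str_consP s.
  have [b2 [f2 [u ->]]] := str_consP t.
  by case: j Hj.
have [b1 [f1 [t ->]]] := str_consP s.
case: j Hj => [|j] Hj.
  have [b2 [f2 [u ->]]] := str_consP t. by [].
transitivity (scons f1 (str_inner j (snoc t f))); first by [].
by rewrite IH.
Qed.

Lemma inner_last n (a b d c : C) (t : str C n a b) (g : Defs.Hom b d) (f : Defs.Hom d c) :
  str_inner n (snoc (snoc t g) f) = snoc t (Defs.comp g f).
Proof.
elim: t d g c f => [b' d g c f | n' a' b' c' h t IH d g c f] //=.
case: n' t IH => [|n'] t IH /=.
  move: b' c' t IH h g; apply: str0P => c' IH h g /=. by [].
transitivity (scons h (str_inner n'.+1 (snoc (snoc t g) f))); first by [].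
by rewrite IH.
Qed.

Lemma uncons_snoc n (a b c b2 : C) (s : str C n.+1 a b) (f : Defs.Hom b c)
  (f1 : Defs.Hom a b2) (t : str C n b2 b) :
  str_uncons s = existT _ b2 (f1, t) -> str_uncons (snoc s f) = existT _ b2 (f1, snoc t f).
Proof.
have [b3 [g [t' ->]]] := str_consP s => /=.
by move/(f_equal (fun p : {y : C & (Defs.Hom a y * str C n y b)%type} =>
   let: existT y (g, t) := p in existT (fun y => (Defs.Hom a y * str C n.+1 y c)%type) y (g, snoc t f))).
Qed.

Lemma inner_snoc_gen P (j : 'I_P) (a b : C) (s : str C P.+1 a b) :
  exists X : str C P a b, forall c (f : Defs.Hom b c), str_inner j (snoc s f) = snoc X f.
Proof.
case: P j s => [[]//|n] j s.
exists (str_inner j s) => c f; apply: inner_snoc.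
exact: ltn_ord.
Qed.

Lemma gen_str_sapp (gen : forall a b : C, pred (Defs.Hom a b)) n m (a b c : C)
  (s : str C n a b) (t : str C m b c) :
  gen_str gen (sapp s t) = gen_str gen s && gen_str gen t.
Proof. by elim: s t => //= n' a' b' c' g s' IH t; rewrite IH andbA. Qed.

End Str.

Arguments str_inner : simpl never.

Section LinH.
Variables (R : nzRingType) (U V : lmodType R) (f : U -> V).
Hypothesis Hf : linear f.
Lemma lin0 : f 0 = 0.
Proof. have := Hf 1 0 0; rewrite !scale1r addr0 => h. by apply: (@addrI _ (f 0)); rewrite addr0 -h. Qed.
Lemma linD u v : f (u + v) = f u + f v.
Proof. by have := Hf 1 u v; rewrite !scale1r. Qed.
Lemma linZ e u : f (e *: u) = e *: f u.
Proof. by have := Hf e u 0; rewrite !addr0 lin0 addr0. Qed.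
Lemma linN u : f (- u) = - f u.
Proof. by rewrite -scaleN1r linZ scaleN1r. Qed.
Lemma linB u v : f (u - v) = f u - f v.
Proof. by rewrite linD linN. Qed.
Lemma lin_sum n (F : 'I_n -> U) : f (\sum_(i < n) F i) = \sum_(i < n) f (F i).
Proof.
elim/big_rec2: _ => [|i y1 y2 _ <-]; first exact: lin0.
by rewrite linD.
Qed.
End LinH.

Section Coch.
Variables (k : fieldType) (C : fincat) (A : psh_alg k C) (M : psh_bimod A).
Local Notation tup q c := {ffun 'I_q -> Aob A c}.
Local Notation HomC := (@Defs.Hom C).
Local Notation cmp := (@Defs.comp C _ _ _).

Definition pull q (z c : C) (v : HomC z c) (x : tup q c) : tup q z :=
  [ffun i => Amor A v (x i)].

Lemma pull_id q (c : C) (x : tup q c) : pull (idm c) x = x.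
Proof. by apply/ffunP => i; rewrite ffunE Amor_id. Qed.

Lemma pull_comp q (y z c : C) (f : HomC y z) (g : HomC z c) (x : tup q c) :
  pull (cmp f g) x = pull f (pull g x).
Proof. by apply/ffunP => i; rewrite !ffunE Amor_comp. Qed.

Section PhiDef.
Variables (q : nat) (a b : C) (F : forall y z : C, HomC b y -> HomC y z -> tup q z -> Mob M a).
Fixpoint Phi m (y c : C) (t : str C m y c) : HomC b y -> tup q c -> Mob M a :=
  match t in str _ m y c return HomC b y -> tup q c -> Mob M a with
  | snil _ => fun _ _ => 0
  | scons _ y z c g t' => fun u x => F u g (pull (str_comp t') x) + Phi t' (cmp u g) x
  end.
End PhiDef.
Arguments Phi {q a b} F {m y c} t u x.

Section PhiLemmas.
Variables (q : nat) (a b : C).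
Local Notation Fam := (forall y z : C, HomC b y -> HomC y z -> tup q z -> Mob M a).

Lemma Phi_ext (F F' : Fam) m y c (t : str C m y c) u x :
  (forall y z u g w, F y z u g w = F' y z u g w) -> Phi F t u x = Phi F' t u x.
Proof. by move=> H; elim: t u x => //= n y' z c' g t IH u x; rewrite H IH. Qed.

Lemma Phi_zero m y c (t : str C m y c) u x :
  Phi (fun y z (u : HomC b y) g (w : tup q z) => 0 : Mob M a) t u x = 0.
Proof. by elim: t u x => //= n y' z c' g t IH u x; rewrite IH addr0. Qed.

Lemma Phi_add (F1 F2 : Fam) m y c (t : str C m y c) u x :
  Phi (fun y z u g w => F1 y z u g w + F2 y z u g w) t u x = Phi F1 t u x + Phi F2 t u x.
Proof. by elim: t u x => /= [*|n y' z c' g t IH u x]; rewrite ?addr0 // IH addrACA. Qed.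

Lemma Phi_scale e (F : Fam) m y c (t : str C m y c) u x :
  Phi (fun y z u g w => e *: F y z u g w) t u x = e *: Phi F t u x.
Proof. by elim: t u x => /= [*|n y' z c' g t IH u x]; rewrite ?scaler0 // IH scalerDr. Qed.

Lemma Phi_sum n (F : 'I_n -> Fam) m y c (t : str C m y c) u x :
  Phi (fun y z u g w => \sum_(j < n) F j y z u g w) t u x = \sum_(j < n) Phi (F j) t u x.
Proof.
elim: t u x => /= [*|n' y' z c' g t IH u x]; first by rewrite big1.
by rewrite IH big_split.
Qed.

Lemma Phi_shift (b' : C) (a0 : HomC b b') (F : Fam) m y c (t : str C m y c) (u : HomC b' y) x :
  Phi (fun y z u g w => F y z (cmp a0 u) g w) t u x = Phi F t (cmp a0 u) x.
Proof. by elim: t u x => //= n y' z c' g t IH u x; rewrite IH comp_assoc. Qed.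

Lemma Phi_app (F : Fam) n1 n2 y d c (s1 : str C n1 y d) (s2 : str C n2 d c) u x :
  Phi F (sapp s1 s2) u x = Phi F s1 u (pull (str_comp s2) x) + Phi F s2 (cmp u (str_comp s1)) x.
Proof.
elim: s1 s2 u x => /= [d' s2 u x|n y' z c' g t IH s2 u x]; first by rewrite add0r comp_id_r.
by rewrite IH str_comp_sapp pull_comp addrA comp_assoc.
Qed.

Lemma Phi_tele (K : forall z : C, HomC b z -> tup q z -> Mob M a) m y c (t : str C m y c) u x :
  Phi (fun y z u g w => K z (cmp u g) w - K y u (pull g w)) t u x
  = K c (cmp u (str_comp t)) x - K y u (pull (str_comp t) x).
Proof.
elim: t u x => /= [c' u x|n y' z c' g t IH u x]; first by rewrite comp_id_r pull_id subrr.
rewrite IH -pull_comp comp_assoc addrC addrA.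
by rewrite subrK.
Qed.

End PhiLemmas.

Section MmorLin.
Lemma Phi_Mmor q (a a' b : C) (f1 : HomC a a') (F : forall y z : C, HomC b y -> HomC y z -> tup q z -> Mob M a')
   m y c (t : str C m y c) u x :
  Phi (fun y z u g w => Mmor M f1 (F y z u g w)) t u x = Mmor M f1 (Phi F t u x).
Proof.
elim: t u x => /= [*|n y' z c' g t IH u x]; first by rewrite (lin0 (Mmor_linear f1)).
by rewrite IH (linD (Mmor_linear f1)).
Qed.
End MmorLin.


Lemma addr3ACA (V : zmodType) (a1 a2 b1 b2 c1 c2 : V) :
  a1 + a2 + (b1 + b2) + (c1 + c2) = a1 + b1 + c1 + (a2 + b2 + c2).
Proof. by rewrite (addrACA a1) (addrACA (a1 + b1)). Qed.

Definition dHHat q (a c : C) (phi : Aob A c -> Aob A a) (F : tup q c -> Mob M a)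
  (x : tup q.+1 c) : Mob M a :=
  lact M (phi (x ord0)) (F (tl_tuple x))
  + \sum_(i < q) (-1) ^+ i.+1 *: F (merge_tuple i x)
  + (-1) ^+ q.+1 *: ract M (F (init_tuple x)) (phi (x ord_max)).

Lemma dHH_at p q (G : cochain M p q) a c (s : str C p a c) x :
  dHH G s x = dHHat (Amor A (str_comp s)) (G a c s) x.
Proof. by []. Qed.

Lemma dHHat_ext q (a c : C) phi (F F' : tup q c -> Mob M a) x :
  (forall w, F w = F' w) -> dHHat phi F x = dHHat phi F' x.
Proof.
move=> H; rewrite /dHHat !H; congr (_ + _ + _).
by apply: eq_bigr => i _; rewrite H.
Qed.

Lemma dHHat_add q (a c : C) phi (F1 F2 : tup q c -> Mob M a) x :
  dHHat phi (fun w => F1 w + F2 w) x = dHHat phi F1 x + dHHat phi F2 x.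
Proof.
rewrite /dHHat (linD (lact_linr _)) (linD (ract_linl _)) scalerDr.
under eq_bigr do rewrite scalerDr.
rewrite big_split /=.
exact: addr3ACA.
Qed.

Lemma dHHat_scale q (a c : C) phi (F : tup q c -> Mob M a) e x :
  dHHat phi (fun w => e *: F w) x = e *: dHHat phi F x.
Proof.
rewrite /dHHat (linZ (lact_linr _)) (linZ (ract_linl _)) !scalerDr scaler_sumr.
by rewrite !scalerA (mulrC e); congr (_ + _ + _); apply: eq_bigr => i _; rewrite !scalerA mulrC.
Qed.

Lemma dHHat_zero q (a c : C) phi x :
  dHHat phi (fun w : tup q c => 0 : Mob M a) x = 0.
Proof.
rewrite /dHHat (lin0 (lact_linr _)) (lin0 (ract_linl _)) scaler0 big1 ?addr0 //.
by move=> i _; rewrite scaler0.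
Qed.

Lemma pull_tl q z c (v : HomC z c) (x : tup q.+1 c) : tl_tuple (pull v x) = pull v (tl_tuple x).
Proof. by apply/ffunP => i; rewrite !ffunE. Qed.
Lemma pull_init q z c (v : HomC z c) (x : tup q.+1 c) : init_tuple (pull v x) = pull v (init_tuple x).
Proof. by apply/ffunP => i; rewrite !ffunE. Qed.
Lemma pull_merge q z c (v : HomC z c) (x : tup q.+1 c) i :
  merge_tuple i (pull v x) = pull v (merge_tuple i x).
Proof.
apply/ffunP => j; rewrite !ffunE.
case: ifP => _ //.
case: ifP => _ //.
by rewrite ((Amor_monoid A v).2).
Qed.

Lemma dHHat_pull q (a z c : C) (phi : Aob A c -> Aob A a) (phi' : Aob A z -> Aob A a)
  (v : HomC z c) (F : tup q z -> Mob M a) x :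
  (forall w, phi w = phi' (Amor A v w)) ->
  dHHat phi (fun w => F (pull v w)) x = dHHat phi' F (pull v x).
Proof.
move=> H; rewrite /dHHat !H pull_tl pull_init !ffunE; congr (_ + _ + _).
by apply: eq_bigr => i _; rewrite pull_merge.
Qed.

Lemma pull_fset q z c (v : HomC z c) (x : tup q c) i y :
  pull v (fset_at x i y) = fset_at (pull v x) i (Amor A v y).
Proof. by apply/ffunP => j; rewrite !ffunE; case: ifP. Qed.

Variable dec : forall (a c : C), HomC a c -> {n : nat & str C n a c}.
Variable dec_comp : forall (a b c : C) (f : HomC a b) (g : HomC b c),
  dec (cmp f g) = existT _ _ (sapp (projT2 (dec f)) (projT2 (dec g))).
Variable dec_str : forall (a c : C) (f : HomC a c), str_comp (projT2 (dec f)) = f.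

Definition hop q P (G : cochain M P.+2 q) : cochain M P.+1 q :=
  fun a c s x => let: existT b (tau, f) := str_unsnoc s in
     Phi (fun y z (u : HomC b y) (g : HomC y z) (w : tup q z) => G a z (snoc (snoc tau u) g) w)
       (projT2 (dec f)) (idm b) x.

Definition sop q P (G : cochain M P.+1 q) : cochain M P q :=
  fun a c s x => G a c (snoc s (idm c)) x.

Lemma hop_snoc q P (G : cochain M P.+2 q) a b c (tau : str C P a b) (f : HomC b c) x :
  hop G (snoc tau f) x =
  Phi (fun y z (u : HomC b y) (g : HomC y z) (w : tup q z) => G a z (snoc (snoc tau u) g) w)
       (projT2 (dec f)) (idm b) x.
Proof. by rewrite /hop unsnoc_snoc. Qed.

Lemma hop_ext q P (G G' : cochain M P.+2 q) a c (s : str C P.+1 a c) x :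
  (forall a c s x, G a c s x = G' a c s x) -> hop G s x = hop G' s x.
Proof.
move=> H; have [b [tau [f ->]]] := snocP s.
by rewrite !hop_snoc; apply: Phi_ext => *; rewrite H.
Qed.

Lemma hop_zero q P (G : cochain M P.+2 q) a c (s : str C P.+1 a c) x :
  (forall a c s x, G a c s x = 0) -> hop G s x = 0.
Proof.
move=> H; have [b [tau [f ->]]] := snocP s.
by rewrite !hop_snoc (Phi_ext (F' := fun y z (u : HomC b y) g (w : tup q z) => 0)) ?Phi_zero.
Qed.

Lemma dHH_Phi q P (K : cochain M P.+2 q) a b (tau : str C P a b) m y c (t : str C m y c)
  (u : HomC b y) (phi : Aob A c -> Aob A a) x :
  (forall w, phi w = Amor A (cmp (str_comp tau) (cmp u (str_comp t))) w) ->
  dHHat phi (fun w => Phi (fun y z (u : HomC b y) (g : HomC y z) (w : tup q z) =>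
                               K a z (snoc (snoc tau u) g) w) t u w) x
  = Phi (fun y z (u : HomC b y) (g : HomC y z) (w : tup q.+1 z) =>
                               dHH K (snoc (snoc tau u) g) w) t u x.
Proof.
elim: t u phi x => [c' u phi x H | n y' z c' g t IH u phi x H] /=.
  exact: dHHat_zero.
rewrite dHHat_add; congr (_ + _).
  rewrite (dHHat_pull (phi' := Amor A (str_comp (snoc (snoc tau u) g)))) //.
  move=> w; rewrite H !str_comp_snoc -Amor_comp; congr (Amor A _ w).
  by rewrite !comp_assoc.
apply: IH => w; rewrite H; congr (Amor A _ w).
by rewrite !comp_assoc.
Qed.

Lemma hop_dHH q P (K : cochain M P.+2 q) a c (s : str C P.+1 a c) x :
  dHHat (Amor A (str_comp s)) (hop K s) x = hop (dHH K) s x.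
Proof.
have [b [tau [f ->]]] := snocP s.
rewrite (dHHat_ext _ (F' := fun w => Phi (fun y z (u : HomC b y) (g : HomC y z) (w : tup q z) =>
   K a z (snoc (snoc tau u) g) w) (projT2 (dec f)) (idm b) w)); last by move=> w; rewrite hop_snoc.
rewrite hop_snoc; apply: dHH_Phi => w.
by rewrite str_comp_snoc comp_id_l dec_str.
Qed.

Lemma sop_dHH q P (K : cochain M P.+1 q) a c (s : str C P a c) x :
  dHHat (Amor A (str_comp s)) (sop K s) x = sop (dHH K) s x.
Proof. by rewrite /sop dHH_at str_comp_snoc comp_id_r. Qed.

Lemma lin_comb (U V : lmodType k) (f g : U -> V) e :
  linear f -> linear g -> linear (fun y => e *: (f y - g y)).
Proof.
move=> Hf Hg a u v.
rewrite (linD Hf) (linD Hg) (linZ Hf) (linZ Hg).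
rewrite !scalerBr !scalerDr !scalerA mulrC opprD addrACA.
by rewrite -!scalerA -scalerBr.
Qed.

Lemma Phi_multilin q P (K : cochain M P.+2 q) a b (tau : str C P a b) m y c (t : str C m y c)
  (u : HomC b y) (x : tup q c) i :
  multilin K ->
  linear (fun v => Phi (fun y z (u : HomC b y) (g : HomC y z) (w : tup q z) =>
                               K a z (snoc (snoc tau u) g) w) t u (fset_at x i v)).
Proof.
move=> HK.
elim: t u x i => [c' u x i | n y' z c' g t IH u x i] /=.
  by move=> e v1 v2; rewrite scaler0 addr0.
move=> e v1 v2; rewrite IH !pull_fset.
rewrite (linD (Amor_linear _)) (linZ (Amor_linear _)) HK.
by rewrite scalerDr !addrA; congr (_ + _); rewrite addrAC.
Qed.

Lemma hop_multilin q P (K : cochain M P.+2 q) : multilin K -> multilin (hop K).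
Proof.
move=> HK a c s i x.
have [b [tau [f ->]]] := snocP s.
move=> e v1 v2; rewrite !hop_snoc.
move: e v1 v2; exact: Phi_multilin.
Qed.

Lemma sop_multilin q P (K : cochain M P.+1 q) : multilin K -> multilin (sop K).
Proof. by move=> HK a c s i x; apply: HK. Qed.


Lemma pullE q z c (v : HomC z c) (x : tup q c) : [ffun i => Amor A v (x i)] = pull v x.
Proof. by []. Qed.

Lemma dsimp_inner_lin p q (G1 G2 : cochain M p q) e a c (s : str C p.+1 a c) x :
  dsimp_inner (fun a c s x => e *: (G1 a c s x - G2 a c s x)) s x
  = e *: (dsimp_inner G1 s x - dsimp_inner G2 s x).
Proof.
case: p G1 G2 s => [|n] G1 G2 s /=; first by rewrite subrr scaler0.
rewrite -sumrB scaler_sumr; apply: eq_bigr => j _.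
by rewrite -scalerBr !scalerA mulrC.
Qed.

Lemma comb3 (V : lmodType k) (e s : k) (a1 a2 a3 b1 b2 b3 : V) :
  e *: (a1 - b1) + e *: (a2 - b2) + s *: (e *: (a3 - b3))
  = e *: (a1 + a2 + s *: a3 - (b1 + b2 + s *: b3)).
Proof.
rewrite (scalerA s e) mulrC -(scalerA e s) -!scalerDr; congr (e *: _).
rewrite scalerBr opprD opprD !addrA; congr (_ + _).
by rewrite (addrAC a1 (-b1) a2) (addrAC _ (s *: a3) (-b1)) (addrAC _ (s *: a3) (-b2)).
Qed.

Lemma dsimp_lin p q (G1 G2 : cochain M p q) e a c (s : str C p.+1 a c) x :
  dsimp (fun a c s x => e *: (G1 a c s x - G2 a c s x)) s x = e *: (dsimp G1 s x - dsimp G2 s x).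
Proof.
rewrite /dsimp dsimp_inner_lin.
case: (str_uncons s) => b [f t]; case: (str_unsnoc s) => b' [t' g] /=.
by rewrite (linZ (Mmor_linear f)) (linB (Mmor_linear f)) comb3.
Qed.

Lemma lemB q P (G : cochain M P.+2 q) a b1 c (s' : str C P.+1 a b1) (b' : HomC b1 c) x :
  sop (dsimp G) (snoc s' b') x
  = dsimp (sop G) (snoc s' b') x - (-1)^+P.+2 *: G a b1 (snoc s' (idm b1)) (pull b' x).
Proof.
have [a1 [f1 [t Ht]]] := str_consP (snoc s' b').
have Hu : str_uncons (snoc s' b') = existT _ a1 (f1, t) by rewrite Ht.
rewrite /sop /dsimp (uncons_snoc _ Hu) Hu !unsnoc_snoc /= !pullE pull_id addrK.
rewrite big_ord_recr (_ : nat_of_ord (@ord_max P.+1) = P.+1) // inner_last comp_id_r.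
rewrite -!addrA; congr (_ + _).
rewrite (exprS _ P.+2) mulN1r scaleNr addrA addrK.
by apply: eq_bigr => j _; rewrite inner_snoc //= ltn_ord.
Qed.


Arguments hop : simpl never.

Lemma arith5 (V : zmodType) (m s pa pb d : V) :
  m + (s + (pa + pb)) - pa - (m + s + pb - d) = d.
Proof.
by rewrite !addrA (addrAC _ pa pb) addrK opprB addrCA subrr addr0.
Qed.

Lemma lemA q P (G : cochain M P.+2 q) a b0 b1 c (tau : str C P a b0) (a' : HomC b0 b1)
  (b' : HomC b1 c) x :
  dsimp (hop G) (snoc (snoc tau a') b') x - hop (dsimp G) (snoc (snoc tau a') b') x
  = (-1)^+P.+1 *: (G a c (snoc (snoc tau a') b') x
                   - G a b1 (snoc (snoc tau a') (idm b1)) (pull b' x)).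
Proof.
have [a1 [f1 [t' Ht]]] := str_consP (snoc tau a').
have Hu : str_uncons (snoc tau a') = existT _ a1 (f1, t') by rewrite Ht.
rewrite [hop (dsimp G) _ _]hop_snoc.
rewrite (Phi_ext (F' := fun y z (u : HomC b1 y) (g : HomC y z) (w : tup q z) =>
   Mmor M f1 (G a1 z (snoc (snoc t' u) g) w)
   + \sum_(j < P) (-1)^+j.+1 *: G a z (str_inner j (snoc (snoc (snoc tau a') u) g)) w
   + (-1)^+P.+1 *: G a z (snoc (snoc tau (cmp a' u)) g) w
   + (-1)^+P.+2 *: (G a z (snoc (snoc tau a') (cmp u g)) w
                    - G a y (snoc (snoc tau a') u) (pull g w)))); last first.
  move=> y z u g w.
  rewrite /dsimp (uncons_snoc _ (uncons_snoc _ Hu)) unsnoc_snoc /= pullE.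
  rewrite big_ord_recr big_ord_recr /=.
  rewrite (inner_last (snoc tau a') u g) (inner_snoc (j := P)) // inner_last.
  by rewrite scalerBr (exprS _ P.+2) mulN1r scaleNr !addrA.
rewrite Phi_add Phi_add Phi_add Phi_Mmor Phi_sum Phi_scale Phi_scale.
rewrite (Phi_shift a' (fun y z (u : HomC b0 y) (g : HomC y z) (w : tup q z) =>
   G a z (snoc (snoc tau u) g) w)) comp_id_r.
rewrite (Phi_tele (fun z (v : HomC b1 z) w => G a z (snoc (snoc tau a') v) w)).
rewrite comp_id_l dec_str.
rewrite /dsimp (uncons_snoc _ Hu) !unsnoc_snoc /= pullE.
rewrite big_ord_recr /= inner_last !hop_snoc dec_comp /= Phi_app !dec_str comp_id_l.
set Sl := \sum_(i < P) _.
set Sr := \sum_(j < P) _.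
have -> : Sl = Sr.
  apply: eq_bigr => j _; rewrite Phi_scale; congr (_ *: _).
  have [X HX] := inner_snoc_gen j (snoc tau a').
  rewrite HX hop_snoc; apply: Phi_ext => y z u g w.
  by rewrite inner_snoc ?HX //; apply: leqW.
rewrite (exprS _ P.+1) mulN1r !scaleNr scalerDr.
exact: arith5.
Qed.

Lemma sign_sq P : (-1) ^+ P * (-1) ^+ P = 1 :> k.
Proof. by rewrite -expr2 sqrr_sign. Qed.

Lemma final_arith (V : lmodType k) (e : k) (ee : e * e = 1) (G T E dS : V) :
  G - (- e) *: (T + (- e) *: (G - E) - dS) = e *: (T - (dS - e *: E)).
Proof.
rewrite !scaleNr opprK !scalerBr !scalerA ee !scale1r !opprB !addrA; congr (_ + _).
by rewrite (addrC G) (addrAC _ G) addrK.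
Qed.

Definition Lop q P (G : cochain M P.+2 q) : cochain M P.+1 q :=
  fun a c s x => (-1) ^+ P.+1 *: (hop G s x - sop G s x).
Definition Hop q P (K : cochain M P.+3 q) : cochain M P.+2 q :=
  fun a c s x => (-1) ^+ P *: (hop K s x - sop K s x).

Lemma key q P (G : cochain M P.+2 q) a c (s : str C P.+2 a c) x :
  G a c s x - dsimp (Lop G) s x = Hop (dsimp G) s x.
Proof.
have [b1 [s' [b' ->]]] := snocP s.
have [b0 [tau [a' ->]]] := snocP s'.
rewrite /Lop /Hop dsimp_lin.
have HA := lemA G tau a' b' x.
have HB := lemB G (snoc tau a') b' x.
have HS : dsimp (hop G) (snoc (snoc tau a') b') x
   = hop (dsimp G) (snoc (snoc tau a') b') x
     + (-1) ^+ P.+1 *: (G a c (snoc (snoc tau a') b') x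
                   - G a b1 (snoc (snoc tau a') (idm b1)) (pull b' x)).
  by rewrite -HA addrC subrK.
rewrite HS HB (exprS _ P) mulN1r (exprS _ P.+1) (exprS _ P) mulN1r mulN1r opprK.
exact: final_arith (sign_sq P) _ _ _ _.
Qed.

Lemma dHHat_comb q (a c : C) phi (F1 F2 : tup q c -> Mob M a) e x :
  dHHat phi (fun w => e *: (F1 w - F2 w)) x = e *: (dHHat phi F1 x - dHHat phi F2 x).
Proof.
rewrite dHHat_scale (dHHat_ext _ (F' := fun w => F1 w + (-1) *: F2 w)); last by move=> w; rewrite scaleN1r.
by rewrite dHHat_add dHHat_scale scaleN1r.
Qed.

End Coch.

Theorem corollary3p14 (k : fieldType) (C : fincat) (HC : free_cat C)
  (A : psh_alg k C) (M : psh_bimod A) (p q : nat) :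
  (2 <= p)%N -> E2_zero M p q.
Proof.
case: p => [|[|P]] // _.
have [gen Hgen] := HC.
have Hex : forall (a c : C) (f : Defs.Hom a c), exists d : {n : nat & str C n a c},
    gen_str gen (projT2 d) /\ str_comp (projT2 d) = f /\
    (forall m (t : str C m a c), gen_str gen t -> str_comp t = f -> d = existT _ m t).
  move=> a c f; have [n [s [H1 H2 H3]]] := Hgen a c f.
  by exists (existT _ n s).
pose dec a c f := proj1_sig (constructive_indefinite_description _ (Hex a c f)).
have dec_spec a c f : gen_str gen (projT2 (dec a c f)) /\ str_comp (projT2 (dec a c f)) = f /\
    (forall m (t : str C m a c), gen_str gen t -> str_comp t = f -> dec a c f = existT _ m t).
  exact: (proj2_sig (constructive_indefinite_description _ (Hex a c f))).
have dec_str : forall a c f, str_comp (projT2 (dec a c f)) = f.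
  by move=> a c f; case: (dec_spec a c f) => _ [].
have dec_comp : forall (a b c : C) (f : Defs.Hom a b) (g : Defs.Hom b c),
    dec _ _ (Defs.comp f g) = existT _ _ (sapp (projT2 (dec _ _ f)) (projT2 (dec _ _ g))).
  move=> a b c f g; case: (dec_spec _ _ (Defs.comp f g)) => _ [_ U]; apply: U.
    by rewrite gen_str_sapp (dec_spec _ _ f).1 (dec_spec _ _ g).1.
  by rewrite str_comp_sapp !dec_str.
move=> G HGm HGc HE1.
exists (Lop dec G); split.
- move=> a c s i x; apply: lin_comb; first exact: hop_multilin.
  exact: sop_multilin.
- move=> a c s x; rewrite dHH_at /Lop dHHat_comb (hop_dHH dec_str) sop_dHH.
  rewrite (hop_zero _ _ _ HGc) /sop HGc.
  by rewrite /czero subrr scaler0.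
case: q G HGm HGc HE1 => [|q'] G HGm HGc HE1 /=.
  move=> a c s x; rewrite /csub (key dec_comp dec_str) /Hop.
  rewrite (hop_zero _ _ _ HE1) /sop HE1.
  by rewrite /czero subrr scaler0.
case: HE1 => H [HHm HHe].
exists (Hop dec H); split.
  move=> a c s i x; apply: lin_comb; first exact: hop_multilin.
  exact: sop_multilin.
move=> a c s x; rewrite /csub (key dec_comp dec_str) dHH_at /Hop dHHat_comb.
rewrite (hop_dHH dec_str) sop_dHH.
by rewrite (hop_ext _ _ _ HHe) /sop HHe.
Qed.
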